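(* Let $I=[x_0,x_N]$ with partition $x_0<x_1<\dots<x_N$, and for $i\in\{1,\dots,N\}$ let $I_i=[x_{i-1},x_i]$, $a_i=\frac{x_i-x_{i-1}}{x_N-x_0}$, $l_i(x)=a_ix+\frac{x_Nx_{i-1}-x_0x_i}{x_N-x_0}$ (so $l_i:I\to I_i$ is an affine bijection) and $Q_i=l_i^{-1}:I_i\to I$. Let $0<d\le 1$ and $f\in Lip_d(I)$. For $r\in\mathbb{N}$ let $b_r\in Lip_{d,f}(I)$ with $\|b\|_d:=\sup_{r\in\mathbb{N}}\|b_r\|_d<\infty$, and let $\alpha_{i,r}\in Lip_d(I)$ ($i=1,\dots,N$, $r\in\mathbb{N}$) satisfy $\max_{1\le i\le N}\frac{\|\alpha_{i,r}\|_d}{a_i^d}<\frac12$ for each $r$. Define $T^{\alpha_r}$ on $Lip_{d,f}(I)$ by $$(T^{\alpha_r}g)(x)=f(x)+\alpha_{i,r}(Q_i(x))\,g(Q_i(x))-\alpha_{i,r}(Q_i(x))\,b_r(Q_i(x)),\qquad x\in I_i,\ i=1,\dots,N.$$ Then: (1) $T^{\alpha_r}$ is well defined as a map $Lip_{d,f}(I)\to Lip_{d,f}(I)$; (2) $T^{\alpha_r}:Lip_{d,f}(I)\to Lip_{d,f}(I)$ is a contraction with respect to $\|\cdot\|_d$; (3) there exists a unique function $f^\alpha_{b,Lip_d}\in Lip_{d,f}(I)$ such that for every $g\in Lip_{d,f}(I)$ the sequence $T^{\alpha_1}\circ T^{\alpha_2}\circ\cdots\circ T^{\alpha_r}g$ converges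 (as $r\to\infty$) to $f^\alpha_{b,Lip_d}$.
   Context: For $g:I\to\mathbb{R}$ and $0<d\le1$, $Lip_d(g)=\sup\{|g(x)-g(y)|/|x-y|^d: x,y\in I, x\ne y\}$; $Lip_d(I)=\{g:I\to\mathbb{R}: Lip_d(g)<\infty\}$ with norm $\|g\|_d=\max\{\|g\|_\infty, Lip_d(g)\}$, a Banach space. $Lip_{d,f}(I)=\{g\in Lip_d(I): g(x_0)=f(x_0),\ g(x_N)=f(x_N)\}$, a closed subspace. Convergence in (3) is with respect to $\|\cdot\|_d$. *)

(* Defs.v *)
From Stdlib Require Import Reals Lra.
From Coquelicot Require Import Coquelicot.
Open Scope R_scope.

Definition inI (u v x : R) : Prop := u <= x <= v.

Definition lip_quot (d u v : R) (g : R -> R) (z : R) : Prop :=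
  exists x y, inI u v x /\ inI u v y /\ x <> y /\
    z = Rabs (g x - g y) / Rpower (Rabs (x - y)) d.

Definition Lipd_sn (d u v : R) (g : R -> R) : R := real (Lub_Rbar (lip_quot d u v g)).

Definition in_Lipd (d u v : R) (g : R -> R) : Prop :=
  exists M, forall z, lip_quot d u v g z -> z <= M.

Definition sup_norm (u v : R) (g : R -> R) : R :=
  real (Lub_Rbar (fun z => exists x, inI u v x /\ z = Rabs (g x))).

Definition normd (d u v : R) (g : R -> R) : R :=
  Rmax (sup_norm u v g) (Lipd_sn d u v g).

Definition in_Lipdf (d u v : R) (f g : R -> R) : Prop :=
  in_Lipd d u v g /\ g u = f u /\ g v = f v.

Definition a_coef (xs : nat -> R) (N i : nat) : R :=
  (xs i - xs (i - 1)%nat) / (xs N - xs 0%nat).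

Definition l_map (xs : nat -> R) (N i : nat) (x : R) : R :=
  a_coef xs N i * x + (xs N * xs (i - 1)%nat - xs 0%nat * xs i) / (xs N - xs 0%nat).

Definition Q_map (xs : nat -> R) (N i : nat) (x : R) : R :=
  (x - (xs N * xs (i - 1)%nat - xs 0%nat * xs i) / (xs N - xs 0%nat)) / a_coef xs N i.

Definition T_branch (xs : nat -> R) (N : nat) (f : R -> R) (alpha : nat -> R -> R)
  (b : R -> R) (g : R -> R) (i : nat) (x : R) : R :=
  f x + alpha i (Q_map xs N i x) * g (Q_map xs N i x)
      - alpha i (Q_map xs N i x) * b (Q_map xs N i x).

(* least i in {1,...,N} with x <= xs i (and N if there is none) *)
Fixpoint pick_aux (xs : nat -> R) (x : R) (i n : nat) : nat :=
  match n with
  | O => i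
  | S n' => if Rle_dec x (xs i) then i else pick_aux xs x (S i) n'
  end.

Definition pick_index (xs : nat -> R) (N : nat) (x : R) : nat :=
  pick_aux xs x 1 (N - 1).

(* T^{alpha_r} g, defined on I_i by the i-th branch (choosing the least such i
   at the partition points; part (1) of the theorem says the choice is irrelevant). *)
Definition T_op (xs : nat -> R) (N : nat) (f : R -> R) (alpha : nat -> R -> R)
  (b : R -> R) (g : R -> R) : R -> R :=
  fun x => T_branch xs N f alpha b g (pick_index xs N x) x.

(* T^{alpha_1} o T^{alpha_2} o ... o T^{alpha_r} (sequences indexed from 0:
   Tcomp r g = T_0 (T_1 ( ... (T_{r-1} g)))) *)
Fixpoint Tcomp (Tr : nat -> (R -> R) -> (R -> R)) (r : nat) (g : R -> R) : R -> R :=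
  match r with
  | O => g
  | S r' => Tcomp Tr r' (Tr r' g)
  end.

(* Main.v *)
Require Import Defs.
From Stdlib Require Import Reals Lra Lia Arith.
From Coquelicot Require Import Coquelicot.
Open Scope R_scope.

Definition SB (u v K : R) (h : R -> R) := forall x, inI u v x -> Rabs (h x) <= K.
Definition HB (d u v K : R) (h : R -> R) := forall x y, inI u v x -> inI u v y -> x <> y ->
  Rabs (h x - h y) <= K * Rpower (Rabs (x - y)) d.

Lemma Rpower_pos' x y : 0 < Rpower x y.
Proof. unfold Rpower; apply exp_pos. Qed.

Lemma Lub_le (E : R -> Prop) K : (forall z, E z -> z <= K) -> 0 <= K -> real (Lub_Rbar E) <= K.
Proof.
  intros H HK. destruct (Lub_Rbar_correct E) as [Hub Hl].
  specialize (Hl (Finite K) (fun z Hz => H z Hz)).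
  destruct (Lub_Rbar E); simpl in *; try lra; contradiction.
Qed.

Lemma Lub_ge (E : R -> Prop) z M : E z -> (forall z, E z -> z <= M) -> z <= real (Lub_Rbar E).
Proof.
  intros Hz H. destruct (Lub_Rbar_correct E) as [Hub Hl].
  specialize (Hl (Finite M) (fun z Hz => H z Hz)). specialize (Hub z Hz).
  destruct (Lub_Rbar E); simpl in *; try lra; contradiction.
Qed.

Lemma div_le_of A P K : 0 < P -> A <= K * P -> A / P <= K.
Proof.
  intros HP H. unfold Rdiv. replace K with ((K * P) * / P) by (field; lra).
  apply Rmult_le_compat_r; [left; apply Rinv_0_lt_compat; lra| lra].
Qed.

Lemma normd_le d u v K h : 0 <= K -> SB u v K h -> HB d u v K h -> normd d u v h <= K.
Proof.
  intros HK HS HH. unfold normd. apply Rmax_lub.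
  - unfold sup_norm. apply Lub_le; auto. intros z [x [Hx ->]]. auto.
  - unfold Lipd_sn. apply Lub_le; auto. intros z [x [y [Hx [Hy [Hxy ->]]]]].
    apply div_le_of. apply Rpower_pos'. auto.
Qed.

Lemma HB_in_Lipd d u v K h : HB d u v K h -> in_Lipd d u v h.
Proof.
  intros HH. exists K. intros z [x [y [Hx [Hy [Hxy ->]]]]].
  apply div_le_of. apply Rpower_pos'. auto.
Qed.

Lemma Lip_bounded d u v h : u <= v -> 0 < d -> in_Lipd d u v h -> exists K, SB u v K h.
Proof.
  intros Huv Hd [M HM]. exists (Rabs (h u) + Rabs M * Rpower (v - u + 1) d).
  intros x Hx. destruct (Req_dec x u) as [->|Hne].
  - assert (0 <= Rabs M * Rpower (v - u + 1) d).
    { apply Rmult_le_pos. apply Rabs_pos. left; apply Rpower_pos'. }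
    lra.
  - assert (Hq : lip_quot d u v h (Rabs (h x - h u) / Rpower (Rabs (x - u)) d)).
    { exists x, u. unfold inI in *. repeat split; auto; lra. }
    specialize (HM _ Hq).
    assert (HP : 0 < Rpower (Rabs (x - u)) d) by apply Rpower_pos'.
    assert (H1 : Rabs (h x - h u) <= M * Rpower (Rabs (x - u)) d).
    { apply Rmult_le_reg_r with (/ Rpower (Rabs (x - u)) d).
      apply Rinv_0_lt_compat; auto. rewrite Rmult_assoc, Rinv_r; lra. }
    assert (H2 : Rpower (Rabs (x - u)) d <= Rpower (v - u + 1) d).
    { apply Rle_Rpower_l. lra. split. apply Rabs_pos_lt; lra.
      unfold inI in Hx. rewrite Rabs_right; lra. }
    assert (H3 : M * Rpower (Rabs (x - u)) d <= Rabs M * Rpower (v - u + 1) d).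
    { apply Rle_trans with (Rabs M * Rpower (Rabs (x - u)) d).
      apply Rmult_le_compat_r; [lra| apply Rle_abs].
      apply Rmult_le_compat_l; [apply Rabs_pos| auto]. }
    assert (Rabs (h x) <= Rabs (h u) + Rabs (h x - h u)).
    { replace (h x) with (h u + (h x - h u)) at 1 by ring. apply Rabs_triang. }
    lra.
Qed.

Lemma Lip_SB d u v h : u <= v -> 0 < d -> in_Lipd d u v h -> SB u v (normd d u v h) h.
Proof.
  intros Huv Hd HL. destruct (Lip_bounded d u v h Huv Hd HL) as [K HK].
  intros x Hx. apply Rle_trans with (sup_norm u v h); [|apply Rmax_l].
  unfold sup_norm. apply Lub_ge with K. exists x; auto.
  intros z [y [Hy ->]]; auto.
Qed.

Lemma Lip_HB d u v h : in_Lipd d u v h -> HB d u v (normd d u v h) h.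
Proof.
  intros [M HM] x y Hx Hy Hxy.
  assert (HP : 0 < Rpower (Rabs (x - y)) d) by apply Rpower_pos'.
  assert (Hq : lip_quot d u v h (Rabs (h x - h y) / Rpower (Rabs (x - y)) d)).
  { exists x, y. auto. }
  assert (H1 : Rabs (h x - h y) / Rpower (Rabs (x - y)) d <= normd d u v h).
  { apply Rle_trans with (Lipd_sn d u v h); [|apply Rmax_r].
    unfold Lipd_sn. apply Lub_ge with M; auto. }
  apply Rmult_le_reg_r with (/ Rpower (Rabs (x - y)) d).
  apply Rinv_0_lt_compat; auto. rewrite Rmult_assoc, Rinv_r; lra.
Qed.

Lemma normd_nonneg d u v h : u <= v -> 0 < d -> in_Lipd d u v h -> 0 <= normd d u v h.
Proof.
  intros Huv Hd HL. apply Rle_trans with (Rabs (h u)). apply Rabs_pos.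
  apply Lip_SB; auto. unfold inI; lra.
Qed.

Lemma SB_mono u v K K' h : SB u v K h -> K <= K' -> SB u v K' h.
Proof. intros H HK x Hx. specialize (H x Hx). lra. Qed.

Lemma HB_mono d u v K K' h : HB d u v K h -> K <= K' -> HB d u v K' h.
Proof.
  intros H HK x y Hx Hy Hxy. specialize (H x y Hx Hy Hxy).
  assert (0 < Rpower (Rabs (x - y)) d) by apply Rpower_pos'.
  apply Rle_trans with (1 := H). apply Rmult_le_compat_r; lra.
Qed.

Lemma SB_ext u v K h h' : SB u v K h -> (forall x, inI u v x -> h' x = h x) -> SB u v K h'.
Proof. intros H E x Hx. rewrite E; auto. Qed.

Lemma HB_ext d u v K h h' : HB d u v K h -> (forall x, inI u v x -> h' x = h x) -> HB d u v K h'.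
Proof. intros H E x y Hx Hy Hxy. rewrite (E x), (E y); auto. Qed.

Lemma SB_plus u v K1 K2 h1 h2 : SB u v K1 h1 -> SB u v K2 h2 -> SB u v (K1 + K2) (fun x => h1 x + h2 x).
Proof.
  intros H1 H2 x Hx. specialize (H1 x Hx). specialize (H2 x Hx).
  apply Rle_trans with (1 := Rabs_triang _ _). lra.
Qed.

Lemma HB_plus d u v K1 K2 h1 h2 : HB d u v K1 h1 -> HB d u v K2 h2 -> HB d u v (K1 + K2) (fun x => h1 x + h2 x).
Proof.
  intros H1 H2 x y Hx Hy Hxy. specialize (H1 x y Hx Hy Hxy). specialize (H2 x y Hx Hy Hxy).
  replace (h1 x + h2 x - (h1 y + h2 y)) with ((h1 x - h1 y) + (h2 x - h2 y)) by ring.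
  apply Rle_trans with (1 := Rabs_triang _ _). lra.
Qed.

Lemma SB_opp u v K h : SB u v K h -> SB u v K (fun x => - h x).
Proof. intros H x Hx. rewrite Rabs_Ropp. auto. Qed.

Lemma HB_opp d u v K h : HB d u v K h -> HB d u v K (fun x => - h x).
Proof.
  intros H x y Hx Hy Hxy. replace (- h x - - h y) with (- (h x - h y)) by ring.
  rewrite Rabs_Ropp. auto.
Qed.

Lemma SB_minus u v K1 K2 h1 h2 : SB u v K1 h1 -> SB u v K2 h2 -> SB u v (K1 + K2) (fun x => h1 x - h2 x).
Proof. intros H1 H2. apply (SB_plus u v K1 K2 h1 (fun x => - h2 x)); auto. apply SB_opp; auto. Qed.

Lemma HB_minus d u v K1 K2 h1 h2 : HB d u v K1 h1 -> HB d u v K2 h2 -> HB d u v (K1 + K2) (fun x => h1 x - h2 x).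
Proof. intros H1 H2. apply (HB_plus d u v K1 K2 h1 (fun x => - h2 x)); auto. apply HB_opp; auto. Qed.

Lemma lim_le_ev (s : nat -> R) (l : R) K n : is_lim_seq s l -> (forall m, (n <= m)%nat -> s m <= K) -> l <= K.
Proof.
  intros Hl H. destruct (Rle_dec l K) as [|Hn]; auto. exfalso.
  apply is_lim_seq_spec in Hl. unfold is_lim_seq' in Hl. assert (He : 0 < l - K) by lra.
  destruct (Hl (mkposreal _ He)) as [N0 HN0]. simpl in HN0.
  specialize (HN0 (Nat.max N0 n) (Nat.le_max_l _ _)).
  specialize (H (Nat.max N0 n) (Nat.le_max_r _ _)).
  apply Rabs_def2 in HN0. lra.
Qed.

Lemma xs_mono N xs (Hxs : forall i, (i < N)%nat -> xs i < xs (S i)) :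
  forall k m, (k <= m <= N)%nat -> xs k <= xs m.
Proof.
  intros k m. induction m as [|m IH]; intros Hkm.
  - assert (k = 0%nat) by lia. subst; lra.
  - destruct (Nat.eq_dec k (S m)) as [->|Hne]; [lra|].
    assert (xs m < xs (S m)) by (apply Hxs; lia).
    assert (xs k <= xs m) by (apply IH; lia). lra.
Qed.

Lemma xs_smono N xs (Hxs : forall i, (i < N)%nat -> xs i < xs (S i)) :
  forall k m, (k < m <= N)%nat -> xs k < xs m.
Proof.
  intros k m Hkm. destruct m as [|m]; [lia|].
  assert (xs m < xs (S m)) by (apply Hxs; lia).
  assert (xs k <= xs m) by (apply (xs_mono N xs Hxs); lia). lra.
Qed.

Lemma pick_aux_spec xs x : forall n i, (1 <= i)%nat ->
  let j := pick_aux xs x i n in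
  (i <= j <= i + n)%nat /\ (x <= xs j \/ j = (i + n)%nat) /\
  (forall k, (i <= k < j)%nat -> xs k < x).
Proof.
  induction n as [|n IH]; intros i Hi; simpl.
  - split; [lia|]. split; [right; lia|]. intros; lia.
  - destruct (Rle_dec x (xs i)) as [Hle|Hnle].
    + split; [lia|]. split; [left; auto|]. intros; lia.
    + destruct (IH (S i) ltac:(lia)) as [H1 [H2 H3]].
      split; [lia|]. split.
      * destruct H2 as [H2|H2]; [left; auto| right; lia].
      * intros k Hk. destruct (Nat.eq_dec k i) as [->|]; [lra|]. apply H3; lia.
Qed.

Lemma pick_spec N xs (HN : (1 <= N)%nat) (Hxs : forall i, (i < N)%nat -> xs i < xs (S i)) x :
  inI (xs 0%nat) (xs N) x ->
  let j := pick_index xs N x in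
  (1 <= j <= N)%nat /\ inI (xs (j - 1)%nat) (xs j) x /\
  (forall k, (1 <= k < j)%nat -> xs k < x).
Proof.
  intros Hx. unfold pick_index.
  destruct (pick_aux_spec xs x (N - 1) 1 ltac:(lia)) as [H1 [H2 H3]].
  set (j := pick_aux xs x 1 (N - 1)) in *.
  split; [lia|]. split; [|auto].
  unfold inI in *. split.
  - destruct (Nat.eq_dec j 1) as [->|Hne]; [simpl; lra|].
    left. apply H3; lia.
  - destruct H2 as [H2|H2]; auto. rewrite H2. replace (1 + (N - 1))%nat with N by lia. lra.
Qed.

Lemma locate N xs (HN : (1 <= N)%nat) (Hxs : forall i, (i < N)%nat -> xs i < xs (S i)) x :
  inI (xs 0%nat) (xs N) x -> exists i, (1 <= i <= N)%nat /\ inI (xs (i - 1)%nat) (xs i) x.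
Proof.
  intros Hx. destruct (pick_spec N xs HN Hxs x Hx) as [H1 [H2 _]]. eauto.
Qed.

Lemma pick_cases N xs (HN : (1 <= N)%nat) (Hxs : forall i, (i < N)%nat -> xs i < xs (S i)) i x :
  (1 <= i <= N)%nat -> inI (xs (i - 1)%nat) (xs i) x ->
  pick_index xs N x = i \/ (pick_index xs N x = (i - 1)%nat /\ (2 <= i)%nat /\ x = xs (i - 1)%nat).
Proof.
  intros Hi Hx.
  assert (HxI : inI (xs 0%nat) (xs N) x).
  { unfold inI in *. split.
    - apply Rle_trans with (xs (i-1)%nat); [apply (xs_mono N xs Hxs); lia| lra].
    - apply Rle_trans with (xs i); [lra| apply (xs_mono N xs Hxs); lia]. }
  destruct (pick_spec N xs HN Hxs x HxI) as [H1 [H2 H3]].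
  set (j := pick_index xs N x) in *. unfold inI in *.
  destruct (lt_eq_lt_dec j i) as [[Hlt|Heq]|Hgt].
  - right. destruct (Nat.eq_dec j (i - 1)) as [Hj|Hj].
    + split; auto. split; [lia|].
      rewrite <- Hj. apply Rle_antisym; [lra|].
      apply Rle_trans with (xs (i-1)%nat); [|lra]. rewrite Hj; lra.
    + exfalso. assert (xs j < xs (i - 1)%nat) by (apply (xs_smono N xs Hxs); lia). lra.
  - left; auto.
  - exfalso. specialize (H3 i ltac:(lia)). lra.
Qed.

Lemma Q_eq N xs (Hxs : forall i, (i < N)%nat -> xs i < xs (S i)) i x :
  (1 <= i <= N)%nat ->
  Q_map xs N i x = xs 0%nat + (x - xs (i - 1)%nat) * (xs N - xs 0%nat) / (xs i - xs (i - 1)%nat).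
Proof.
  intros Hi.
  assert (xs (i-1)%nat < xs i) by (apply (xs_smono N xs Hxs); lia).
  assert (xs 0%nat < xs N) by (apply (xs_smono N xs Hxs); lia).
  unfold Q_map, a_coef. field. lra.
Qed.

Lemma a_pos N xs (Hxs : forall i, (i < N)%nat -> xs i < xs (S i)) i :
  (1 <= i <= N)%nat -> 0 < a_coef xs N i.
Proof.
  intros Hi.
  assert (xs (i-1)%nat < xs i) by (apply (xs_smono N xs Hxs); lia).
  assert (xs 0%nat < xs N) by (apply (xs_smono N xs Hxs); lia).
  unfold a_coef. apply Rdiv_lt_0_compat; lra.
Qed.

Lemma a_le1 N xs (Hxs : forall i, (i < N)%nat -> xs i < xs (S i)) i :
  (1 <= i <= N)%nat -> a_coef xs N i <= 1.
Proof.
  intros Hi.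
  assert (xs 0%nat <= xs (i-1)%nat) by (apply (xs_mono N xs Hxs); lia).
  assert (xs i <= xs N) by (apply (xs_mono N xs Hxs); lia).
  assert (xs 0%nat < xs N) by (apply (xs_smono N xs Hxs); lia).
  unfold a_coef. apply div_le_of; lra.
Qed.

Lemma Q_diff N xs (Hxs : forall i, (i < N)%nat -> xs i < xs (S i)) i x y :
  (1 <= i <= N)%nat -> x - y = a_coef xs N i * (Q_map xs N i x - Q_map xs N i y).
Proof.
  intros Hi. rewrite !(Q_eq N xs Hxs); auto.
  assert (xs (i-1)%nat < xs i) by (apply (xs_smono N xs Hxs); lia).
  assert (xs 0%nat < xs N) by (apply (xs_smono N xs Hxs); lia).
  unfold a_coef. field. lra.
Qed.

Lemma Q_left N xs (Hxs : forall i, (i < N)%nat -> xs i < xs (S i)) i :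
  (1 <= i <= N)%nat -> Q_map xs N i (xs (i - 1)%nat) = xs 0%nat.
Proof. intros Hi. rewrite (Q_eq N xs Hxs); auto. unfold Rdiv. ring. Qed.

Lemma Q_right N xs (Hxs : forall i, (i < N)%nat -> xs i < xs (S i)) i :
  (1 <= i <= N)%nat -> Q_map xs N i (xs i) = xs N.
Proof.
  intros Hi. rewrite (Q_eq N xs Hxs); auto.
  assert (xs (i-1)%nat < xs i) by (apply (xs_smono N xs Hxs); lia). field. lra.
Qed.

Lemma Q_in N xs (Hxs : forall i, (i < N)%nat -> xs i < xs (S i)) i x :
  (1 <= i <= N)%nat -> inI (xs (i - 1)%nat) (xs i) x -> inI (xs 0%nat) (xs N) (Q_map xs N i x).
Proof.
  intros Hi Hx. rewrite (Q_eq N xs Hxs); auto.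
  assert (xs (i-1)%nat < xs i) by (apply (xs_smono N xs Hxs); lia).
  assert (xs 0%nat < xs N) by (apply (xs_smono N xs Hxs); lia).
  unfold inI in *. set (D := xs i - xs (i-1)%nat). set (L := xs N - xs 0%nat).
  assert (0 <= (x - xs (i - 1)%nat) * L / D).
  { apply Rdiv_le_0_compat; [apply Rmult_le_pos|]; unfold L, D; lra. }
  assert ((x - xs (i - 1)%nat) * L / D <= L).
  { apply div_le_of. unfold D; lra. 
    replace (L * D) with (D * L) by ring. apply Rmult_le_compat_r; unfold L, D; lra. }
  unfold L in *. lra.
Qed.

Lemma Pw_scale d a t : 0 < a -> t <> 0 ->
  Rpower (Rabs (a * t)) d = Rpower a d * Rpower (Rabs t) d.
Proof.
  intros Ha Ht. rewrite Rabs_mult, (Rabs_right a) by lra.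
  rewrite Rpower_mult_distr; auto. apply Rabs_pos_lt; auto.
Qed.

Lemma Rpower_le1 a d : 0 < a <= 1 -> 0 <= d -> Rpower a d <= 1.
Proof.
  intros Ha Hd. assert (E : Rpower 1 d = 1).
  { unfold Rpower. rewrite ln_1, Rmult_0_r. apply exp_0. }
  rewrite <- E. apply Rle_Rpower_l; lra.
Qed.

Lemma Rpower_half_lt1 d : 0 < d -> Rpower (/2) d < 1.
Proof.
  intros Hd. unfold Rpower. rewrite <- exp_0. apply exp_increasing.
  assert (ln (/2) < 0). { rewrite <- ln_1. apply ln_increasing; lra. }
  nra.
Qed.

Lemma core N xs d c Mv Lv (al : nat -> R -> R) (v w : R -> R)
  (HN : (1 <= N)%nat) (Hxs : forall i, (i < N)%nat -> xs i < xs (S i))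
  (Hd : 0 < d <= 1) (Hc : 0 <= c) (HMv : 0 <= Mv) (HLv : 0 <= Lv)
  (HalS : forall i, (1 <= i <= N)%nat -> SB (xs 0%nat) (xs N) (c * Rpower (a_coef xs N i) d / 2) (al i))
  (HalH : forall i, (1 <= i <= N)%nat -> HB d (xs 0%nat) (xs N) (c * Rpower (a_coef xs N i) d / 2) (al i))
  (Hv0 : v (xs 0%nat) = 0) (HvN : v (xs N) = 0)
  (HvS : SB (xs 0%nat) (xs N) Mv v) (HvH : HB d (xs 0%nat) (xs N) Lv v)
  (Hw : forall i x, (1 <= i <= N)%nat -> inI (xs (i - 1)%nat) (xs i) x ->
        w x = al i (Q_map xs N i x) * v (Q_map xs N i x)) :
  SB (xs 0%nat) (xs N) (c * Mv / 2) w /\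
  HB d (xs 0%nat) (xs N) (c * Rmax ((Mv + Lv) / 2) ((1 + Rpower (/2) d) / 2 * Lv)) w.
Proof.
  assert (Hend : forall i x e s, (1 <= i <= N)%nat -> inI (xs (i - 1)%nat) (xs i) x ->
            (e = i \/ e = (i - 1)%nat) -> Q_map xs N i (xs e) = xs 0%nat \/ Q_map xs N i (xs e) = xs N ->
            0 < s -> Rabs (x - xs e) <= s ->
            Rabs (w x) <= c / 2 * Lv * Rpower s d).
  { intros i x e s Hi Hx He HQe Hs Hxe.
    assert (Hnn : 0 <= c / 2 * Lv * Rpower s d).
    { apply Rmult_le_pos; [nra| left; apply Rpower_pos']. }
    assert (Hve : v (Q_map xs N i (xs e)) = 0) by (destruct HQe as [-> | ->]; auto).
    rewrite (Hw i x Hi Hx).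
    destruct (Req_dec x (xs e)) as [Heq|Hne].
    { rewrite Heq, Hve, Rmult_0_r, Rabs_R0. auto. }
    set (p := Q_map xs N i x). set (q := Q_map xs N i (xs e)).
    assert (Hd1 := Q_diff N xs Hxs i x (xs e) Hi). fold p q in Hd1.
    assert (Ha := a_pos N xs Hxs i Hi). set (a := a_coef xs N i) in *.
    assert (Hpq : p - q <> 0).
    { intro H0. apply Hne. rewrite H0, Rmult_0_r in Hd1. lra. }
    assert (HpI : inI (xs 0%nat) (xs N) p) by (apply Q_in; auto).
    assert (HqI : inI (xs 0%nat) (xs N) q).
    { unfold q. destruct HQe as [-> | ->]; unfold inI;
      assert (xs 0%nat <= xs N) by (apply (xs_mono N xs Hxs); lia); lra. }
    assert (H1 : Rabs (al i p) <= c * Rpower a d / 2) by (apply HalS; auto).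
    assert (H2 : Rabs (v p - v q) <= Lv * Rpower (Rabs (p - q)) d).
    { apply HvH; auto. lra. }
    replace (v p) with (v p - v q) by (unfold q; rewrite Hve; ring).
    rewrite Rabs_mult.
    assert (H3 : Rpower (Rabs (x - xs e)) d = Rpower a d * Rpower (Rabs (p - q)) d).
    { rewrite Hd1. apply Pw_scale; auto. }
    assert (H4 : Rpower (Rabs (x - xs e)) d <= Rpower s d).
    { apply Rle_Rpower_l; [lra|]. split; auto. apply Rabs_pos_lt; lra. }
    assert (0 < Rpower a d) by apply Rpower_pos'.
    assert (0 < Rpower (Rabs (p - q)) d) by apply Rpower_pos'.
    apply Rle_trans with ((c * Rpower a d / 2) * (Lv * Rpower (Rabs (p - q)) d)).
    { apply Rmult_le_compat; auto; apply Rabs_pos. }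
    apply Rle_trans with (c / 2 * Lv * Rpower (Rabs (x - xs e)) d).
    { rewrite H3. right; field. }
    apply Rmult_le_compat_l; auto. nra. }
  split.
  - intros x Hx. destruct (locate N xs HN Hxs x Hx) as [i [Hi Hxi]].
    rewrite (Hw i x Hi Hxi), Rabs_mult.
    assert (HpI := Q_in N xs Hxs i x Hi Hxi).
    assert (H1 := HalS i Hi _ HpI). assert (H2 := HvS _ HpI).
    assert (Ha := a_pos N xs Hxs i Hi). assert (Ha1 := a_le1 N xs Hxs i Hi).
    assert (Hp1 := Rpower_le1 (a_coef xs N i) d ltac:(lra) ltac:(lra)).
    apply Rle_trans with ((c * Rpower (a_coef xs N i) d / 2) * Mv).
    { apply Rmult_le_compat; auto; apply Rabs_pos. }
    assert (0 <= c * Mv) by (apply Rmult_le_pos; auto). nra.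
  - set (rho := (1 + Rpower (/2) d) / 2).
    assert (Hh0 : 0 < Rpower (/2) d) by apply Rpower_pos'.
    assert (Hcross : forall i j x y, (1 <= i <= N)%nat -> (1 <= j <= N)%nat -> (i < j)%nat ->
              inI (xs (i - 1)%nat) (xs i) x -> inI (xs (j - 1)%nat) (xs j) y -> x <> y ->
              Rabs (w x - w y) <= c * rho * Lv * Rpower (Rabs (x - y)) d).
    { intros i j x y Hi Hj Hij Hx Hy Hxy.
      assert (xs i <= xs (j - 1)%nat) by (apply (xs_mono N xs Hxs); lia).
      unfold inI in Hx, Hy.
      assert (HD : 0 < y - x) by (destruct (Req_dec x y); [contradiction| lra]).
      rewrite (Rabs_minus_sym x y), (Rabs_right (y - x)) by lra.
      assert (HQi := Q_right N xs Hxs i Hi). assert (HQj := Q_left N xs Hxs j Hj).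
      assert (Hsplit : Rpower ((y - x) / 2) d = Rpower (/2) d * Rpower (y - x) d).
      { unfold Rdiv. rewrite Rmult_comm, Rpower_mult_distr; lra. }
      assert (0 < Rpower (y - x) d) by apply Rpower_pos'.
      assert (Hwx2 : Rabs (w x - w y) <= Rabs (w x) + Rabs (w y)).
      { unfold Rminus. apply Rle_trans with (1 := Rabs_triang _ _). rewrite Rabs_Ropp. lra. }
      destruct (Rle_dec (xs i - x) (y - xs (j - 1)%nat)).
      + assert (A1 : Rabs (w x) <= c / 2 * Lv * Rpower ((y - x) / 2) d).
        { apply (Hend i x i); auto; [lra|]. rewrite Rabs_minus_sym, Rabs_right; lra. }
        assert (A2 : Rabs (w y) <= c / 2 * Lv * Rpower (y - x) d).
        { apply (Hend j y (j - 1)%nat); auto. rewrite Rabs_right; lra. }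
        rewrite Hsplit in A1. unfold rho.
        apply Rle_trans with (1 := Hwx2).
        replace (c * rho * Lv * Rpower (y - x) d) with
          (c / 2 * Lv * (Rpower (/ 2) d * Rpower (y - x) d) + c / 2 * Lv * Rpower (y - x) d)
          by (unfold rho; field). lra.
      + assert (A1 : Rabs (w x) <= c / 2 * Lv * Rpower (y - x) d).
        { apply (Hend i x i); auto. rewrite Rabs_minus_sym, Rabs_right; lra. }
        assert (A2 : Rabs (w y) <= c / 2 * Lv * Rpower ((y - x) / 2) d).
        { apply (Hend j y (j - 1)%nat); auto; [lra|]. rewrite Rabs_right; lra. }
        rewrite Hsplit in A2. unfold rho.
        apply Rle_trans with (1 := Hwx2).
        replace (c * ((1 + Rpower (/ 2) d) / 2) * Lv * Rpower (y - x) d) with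
          (c / 2 * Lv * (Rpower (/ 2) d * Rpower (y - x) d) + c / 2 * Lv * Rpower (y - x) d)
          by field. lra. }
    assert (Hwithin : forall i x y, (1 <= i <= N)%nat ->
              inI (xs (i - 1)%nat) (xs i) x -> inI (xs (i - 1)%nat) (xs i) y -> x <> y ->
              Rabs (w x - w y) <= c * ((Mv + Lv) / 2) * Rpower (Rabs (x - y)) d).
    { intros i x y Hi Hx Hy Hxy.
      rewrite (Hw i x Hi Hx), (Hw i y Hi Hy).
      set (p := Q_map xs N i x). set (q := Q_map xs N i y).
      assert (Hd1 := Q_diff N xs Hxs i x y Hi). fold p q in Hd1.
      assert (Ha := a_pos N xs Hxs i Hi). set (a := a_coef xs N i) in *.
      assert (Hpq : p - q <> 0).
      { intro H0. apply Hxy. rewrite H0, Rmult_0_r in Hd1. lra. }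
      assert (HpI : inI (xs 0%nat) (xs N) p) by (apply Q_in; auto).
      assert (HqI : inI (xs 0%nat) (xs N) q) by (apply Q_in; auto).
      assert (Hpq' : p <> q) by lra.
      assert (H1 := HalH i Hi p q HpI HqI Hpq'). fold a in H1.
      assert (H2 := HalS i Hi q HqI). fold a in H2.
      assert (H3 := HvS p HpI). assert (H4 := HvH p q HpI HqI Hpq').
      assert (H5 : Rpower (Rabs (x - y)) d = Rpower a d * Rpower (Rabs (p - q)) d).
      { rewrite Hd1. apply Pw_scale; auto. }
      rewrite H5.
      assert (0 < Rpower a d) by apply Rpower_pos'.
      assert (0 < Rpower (Rabs (p - q)) d) by apply Rpower_pos'.
      replace (al i p * v p - al i q * v q) with ((al i p - al i q) * v p + al i q * (v p - v q)) by ring.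
      apply Rle_trans with (1 := Rabs_triang _ _). rewrite !Rabs_mult.
      apply Rle_trans with ((c * Rpower a d / 2 * Rpower (Rabs (p - q)) d) * Mv +
                            (c * Rpower a d / 2) * (Lv * Rpower (Rabs (p - q)) d)).
      { apply Rplus_le_compat; apply Rmult_le_compat; auto; apply Rabs_pos. }
      right; field. }
    intros x y Hx Hy Hxy.
    destruct (locate N xs HN Hxs x Hx) as [i [Hi Hxi]].
    destruct (locate N xs HN Hxs y Hy) as [j [Hj Hyj]].
    assert (0 < Rpower (Rabs (x - y)) d) by apply Rpower_pos'.
    assert (Hm1 : c * rho * Lv <= c * Rmax ((Mv + Lv) / 2) (rho * Lv)).
    { rewrite Rmult_assoc. apply Rmult_le_compat_l; auto. apply Rmax_r. }
    assert (Hm2 : c * ((Mv + Lv) / 2) <= c * Rmax ((Mv + Lv) / 2) (rho * Lv)).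
    { apply Rmult_le_compat_l; auto. apply Rmax_l. }
    destruct (lt_eq_lt_dec i j) as [[Hlt|Heq]|Hgt].
    + apply Rle_trans with (1 := Hcross i j x y Hi Hj Hlt Hxi Hyj Hxy).
      apply Rmult_le_compat_r; lra.
    + subst j. apply Rle_trans with (1 := Hwithin i x y Hi Hxi Hyj Hxy).
      apply Rmult_le_compat_r; lra.
    + rewrite Rabs_minus_sym, (Rabs_minus_sym x y).
      apply Rle_trans with (1 := Hcross j i y x Hj Hi Hgt Hyj Hxi (not_eq_sym Hxy)).
      rewrite (Rabs_minus_sym y x). apply Rmult_le_compat_r; lra.
Qed.

Definition Bnd (d u v K : R) (h : R -> R) := exists M L, 0 <= M /\ 0 <= L /\ 2 * M + L <= K /\
  SB u v M h /\ HB d u v L h.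

Lemma Bnd_of d u v M L h : 0 <= M -> 0 <= L -> SB u v M h -> HB d u v L h -> Bnd d u v (2 * M + L) h.
Proof. intros; exists M, L; repeat split; auto; lra. Qed.

Lemma Bnd_mono d u v K K' h : Bnd d u v K h -> K <= K' -> Bnd d u v K' h.
Proof. intros [M [L [? [? [? [? ?]]]]]] ?. exists M, L; repeat split; auto; lra. Qed.

Lemma Bnd_ext d u v K h h' : Bnd d u v K h -> (forall x, inI u v x -> h' x = h x) -> Bnd d u v K h'.
Proof.
  intros [M [L [? [? [? [? ?]]]]]] E. exists M, L; repeat split; auto.
  eapply SB_ext; eauto. eapply HB_ext; eauto.
Qed.

Lemma Bnd_plus d u v K1 K2 h1 h2 : Bnd d u v K1 h1 -> Bnd d u v K2 h2 -> Bnd d u v (K1 + K2) (fun x => h1 x + h2 x).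
Proof.
  intros [M1 [L1 [? [? [? [? ?]]]]]] [M2 [L2 [? [? [? [? ?]]]]]].
  exists (M1 + M2), (L1 + L2). repeat split; try lra.
  apply SB_plus; auto. apply HB_plus; auto.
Qed.

Lemma Bnd_SB d u v K h : Bnd d u v K h -> SB u v K h.
Proof. intros [M [L [? [? [? [? ?]]]]]]. eapply SB_mono; eauto. lra. Qed.

Lemma Bnd_HB d u v K h : Bnd d u v K h -> HB d u v K h.
Proof. intros [M [L [? [? [? [? ?]]]]]]. eapply HB_mono; eauto. lra. Qed.

Lemma Bnd_nonneg d u v K h : Bnd d u v K h -> 0 <= K.
Proof. intros [M [L [? [? [? [? ?]]]]]]. lra. Qed.

Lemma Bnd_zero d u v F : Bnd d u v 0 (fun x => F x - F x).
Proof.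
  replace 0 with (2 * 0 + 0) by ring. apply Bnd_of; try lra.
  - intros x _. rewrite Rminus_diag, Rabs_R0. lra.
  - intros x y _ _ _. rewrite !Rminus_diag, Rabs_R0, Rmult_0_l. lra.
Qed.


Lemma iter_Lip d u v f (T : nat -> (R -> R) -> R -> R)
  (PT1 : forall r g, in_Lipdf d u v f g -> in_Lipdf d u v f (T r g)) :
  forall n g, in_Lipdf d u v f g -> in_Lipdf d u v f (Tcomp T n g).
Proof. induction n; intros g Hg; simpl; auto. Qed.

Lemma iter_bnd d u v f th (T : nat -> (R -> R) -> R -> R)
  (PT1 : forall r g, in_Lipdf d u v f g -> in_Lipdf d u v f (T r g))
  (PT3 : forall r g h K, in_Lipdf d u v f g -> in_Lipdf d u v f h ->
         Bnd d u v K (fun x => g x - h x) -> Bnd d u v (th * K) (fun x => T r g x - T r h x)) :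
  forall n g h K, in_Lipdf d u v f g -> in_Lipdf d u v f h -> Bnd d u v K (fun x => g x - h x) ->
    Bnd d u v (th ^ n * K) (fun x => Tcomp T n g x - Tcomp T n h x).
Proof.
  induction n; intros g h K Hg Hh HB0; simpl.
  - apply Bnd_mono with K; [exact HB0| lra].
  - apply Bnd_mono with (th ^ n * (th * K)).
    + apply IHn; [apply PT1; auto| apply PT1; auto| apply PT3; auto].
    + right; ring.
Qed.

Lemma telescope d u v f th K0 g0 (T : nat -> (R -> R) -> R -> R)
  (Hth : 0 <= th < 1) (HK0 : 0 <= K0)
  (PT1 : forall r g, in_Lipdf d u v f g -> in_Lipdf d u v f (T r g))
  (PT3 : forall r g h K, in_Lipdf d u v f g -> in_Lipdf d u v f h ->
         Bnd d u v K (fun x => g x - h x) -> Bnd d u v (th * K) (fun x => T r g x - T r h x))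
  (Hg0 : in_Lipdf d u v f g0)
  (PT4 : forall r, Bnd d u v K0 (fun x => T r g0 x - g0 x)) :
  forall n k, Bnd d u v (K0 * (th ^ n - th ^ (n + k)) / (1 - th))
    (fun x => Tcomp T (n + k) g0 x - Tcomp T n g0 x).
Proof.
  intros n k. induction k.
  - rewrite Nat.add_0_r. eapply Bnd_mono. apply Bnd_zero. right. unfold Rdiv. ring.
  - rewrite Nat.add_succ_r. simpl Tcomp.
    assert (H1 := iter_bnd d u v f th T PT1 PT3 (n + k) (T (n + k)%nat g0) g0 K0 (PT1 _ _ Hg0) Hg0 (PT4 _)).
    assert (H2 := Bnd_plus _ _ _ _ _ _ _ H1 IHk).
    eapply Bnd_mono. eapply Bnd_ext. exact H2. intros x _. simpl. ring.
    simpl. right. field. lra.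
Qed.

Lemma geom_ev C th eps : 0 <= th < 1 -> 0 < eps -> exists N, forall n, (N <= n)%nat -> C * th ^ n < eps.
Proof.
  intros Hth He.
  assert (H := is_lim_seq_scal_l _ C _ (is_lim_seq_geom th ltac:(rewrite Rabs_right; lra))).
  simpl in H. rewrite Rmult_0_r in H. apply is_lim_seq_spec in H.
  destruct (H (mkposreal _ He)) as [N HN]. exists N. intros n Hn.
  specialize (HN n Hn). simpl in HN. rewrite Rminus_0_r in HN.
  apply Rabs_def2 in HN. lra.
Qed.

Lemma limit_exists d u v (F : nat -> R -> R) C th (Hth : 0 <= th < 1) (HC : 0 <= C)
  (Htel : forall n k, Bnd d u v (C * th ^ n) (fun x => F (n + k)%nat x - F n x)) :
  (forall x, inI u v x -> is_lim_seq (fun m => F m x) (real (Lim_seq (fun m => F m x)))) /\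
  (forall n, SB u v (C * th ^ n) (fun x => real (Lim_seq (fun m => F m x)) - F n x) /\
             HB d u v (C * th ^ n) (fun x => real (Lim_seq (fun m => F m x)) - F n x)).
Proof.
  assert (Hmn : forall x m n, inI u v x -> (n <= m)%nat -> Rabs (F m x - F n x) <= C * th ^ n).
  { intros x m n Hx Hnm. replace m with (n + (m - n))%nat by lia.
    apply (Bnd_SB _ _ _ _ _ (Htel n (m - n)%nat)); auto. }
  assert (Hlim : forall x, inI u v x -> is_lim_seq (fun m => F m x) (real (Lim_seq (fun m => F m x)))).
  { intros x Hx.
    assert (Hex : ex_finite_lim_seq (fun m => F m x)).
    { apply ex_lim_seq_cauchy_corr. intros eps.
      assert (He : 0 < eps / 2) by (destruct eps; simpl; lra).
      destruct (geom_ev C th (eps / 2) Hth He) as [N HN]. exists N. intros n m Hn Hm.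
      assert (A1 := Hmn x n N Hx Hn). assert (A2 := Hmn x m N Hx Hm).
      specialize (HN N (Nat.le_refl _)).
      replace (F n x - F m x) with ((F n x - F N x) - (F m x - F N x)) by ring.
      apply Rle_lt_trans with (1 := Rabs_triang _ _). rewrite Rabs_Ropp. lra. }
    destruct Hex as [l Hl]. rewrite (is_lim_seq_unique _ _ Hl). simpl. exact Hl. }
  split; auto. intros n. split.
  - intros x Hx. apply (lim_le_ev (fun m => Rabs (F m x - F n x)) _ _ n).
    + apply (is_lim_seq_abs _ (Finite _)). apply is_lim_seq_minus'. apply Hlim; auto. apply is_lim_seq_const.
    + intros m Hm. apply Hmn; auto.
  - intros x y Hx Hy Hxy.
    apply (lim_le_ev (fun m => Rabs ((F m x - F n x) - (F m y - F n y))) _ _ n).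
    + apply (is_lim_seq_abs _ (Finite _)). apply is_lim_seq_minus'; apply is_lim_seq_minus';
      try apply Hlim; auto; apply is_lim_seq_const.
    + intros m Hm. replace m with (n + (m - n))%nat by lia.
      apply (Bnd_HB _ _ _ _ _ (Htel n (m - n)%nat)); auto.
Qed.

Fixpoint mx (F : nat -> R) (n : nat) : R :=
  match n with O => 0 | S k => Rmax (F (S k)) (mx F k) end.

Lemma mx_ge F n i : (1 <= i <= n)%nat -> F i <= mx F n.
Proof.
  induction n; intros Hi; [lia|]. simpl.
  destruct (Nat.eq_dec i (S n)) as [->|Hne]; [apply Rmax_l|].
  apply Rle_trans with (mx F n); [apply IHn; lia| apply Rmax_r].
Qed.

Lemma mx_nonneg F n : 0 <= mx F n.
Proof. induction n; simpl; [lra|]. apply Rle_trans with (mx F n); auto. apply Rmax_r. Qed.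

Lemma mx_lt F n K : 0 < K -> (forall i, (1 <= i <= n)%nat -> F i < K) -> mx F n < K.
Proof.
  intros HK. induction n; intros H; simpl; auto.
  apply Rmax_lub_lt; [apply H; lia| apply IHn; intros; apply H; lia].
Qed.

Lemma T_branch_ok N xs f alr br g (HN : (1 <= N)%nat) (Hxs : forall i, (i < N)%nat -> xs i < xs (S i))
  (Hg0 : g (xs 0%nat) = br (xs 0%nat)) (HgN : g (xs N) = br (xs N)) i x :
  (1 <= i <= N)%nat -> inI (xs (i - 1)%nat) (xs i) x ->
  T_op xs N f alr br g x = T_branch xs N f alr br g i x.
Proof.
  intros Hi Hx. unfold T_op.
  destruct (pick_cases N xs HN Hxs i x Hi Hx) as [->|[Hp [H2 Hxe]]]; auto.
  rewrite Hp. unfold T_branch. rewrite Hxe.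
  rewrite (Q_left N xs Hxs i Hi).
  assert (Hq : Q_map xs N (i - 1) (xs (i - 1)%nat) = xs N) by (apply (Q_right N xs Hxs); lia).
  rewrite Hq, Hg0, HgN. ring.
Qed.

Lemma T_diff N xs f alr br g h (HN : (1 <= N)%nat) (Hxs : forall i, (i < N)%nat -> xs i < xs (S i))
  (Hg0 : g (xs 0%nat) = br (xs 0%nat)) (HgN : g (xs N) = br (xs N))
  (Hh0 : h (xs 0%nat) = br (xs 0%nat)) (HhN : h (xs N) = br (xs N)) i x :
  (1 <= i <= N)%nat -> inI (xs (i - 1)%nat) (xs i) x ->
  T_op xs N f alr br g x - T_op xs N f alr br h x =
  alr i (Q_map xs N i x) * (g (Q_map xs N i x) - h (Q_map xs N i x)).
Proof.
  intros Hi Hx. rewrite (T_branch_ok N xs f alr br g HN Hxs Hg0 HgN i x Hi Hx).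
  rewrite (T_branch_ok N xs f alr br h HN Hxs Hh0 HhN i x Hi Hx).
  unfold T_branch. ring.
Qed.

Lemma T_minus_f N xs f alr br g (HN : (1 <= N)%nat) (Hxs : forall i, (i < N)%nat -> xs i < xs (S i))
  (Hg0 : g (xs 0%nat) = br (xs 0%nat)) (HgN : g (xs N) = br (xs N)) i x :
  (1 <= i <= N)%nat -> inI (xs (i - 1)%nat) (xs i) x ->
  T_op xs N f alr br g x - f x =
  alr i (Q_map xs N i x) * (g (Q_map xs N i x) - br (Q_map xs N i x)).
Proof.
  intros Hi Hx. rewrite (T_branch_ok N xs f alr br g HN Hxs Hg0 HgN i x Hi Hx).
  unfold T_branch. ring.
Qed.

Lemma T_ends N xs f alr br g (HN : (1 <= N)%nat) (Hxs : forall i, (i < N)%nat -> xs i < xs (S i))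
  (Hg0 : g (xs 0%nat) = br (xs 0%nat)) (HgN : g (xs N) = br (xs N)) :
  T_op xs N f alr br g (xs 0%nat) = f (xs 0%nat) /\ T_op xs N f alr br g (xs N) = f (xs N).
Proof.
  assert (xs 0%nat < xs 1%nat) by (apply Hxs; lia).
  assert (xs (N - 1)%nat < xs N) by (apply (xs_smono N xs Hxs); lia).
  split.
  - rewrite (T_branch_ok N xs f alr br g HN Hxs Hg0 HgN 1 (xs 0%nat)); [|lia| unfold inI; simpl; lra].
    unfold T_branch. replace (xs 0%nat) with (xs (1 - 1)%nat) at 2 3 4 5 6 by reflexivity.
    rewrite (Q_left N xs Hxs 1) by lia. simpl. rewrite Hg0. ring.
  - rewrite (T_branch_ok N xs f alr br g HN Hxs Hg0 HgN N (xs N)); [|lia| unfold inI; lra].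
    unfold T_branch. rewrite (Q_right N xs Hxs N) by lia. rewrite HgN. ring.
Qed.

Theorem mainTheorem1
  (N : nat) (xs : nat -> R) (d : R) (f : R -> R)
  (b : nat -> R -> R) (alpha : nat -> nat -> R -> R)
  (HN : (1 <= N)%nat)
  (Hxs : forall i, (i < N)%nat -> xs i < xs (S i))
  (Hd : 0 < d <= 1)
  (Hf : in_Lipd d (xs 0%nat) (xs N) f)
  (Hb : forall r, in_Lipdf d (xs 0%nat) (xs N) f (b r))
  (Hbnd : exists M, forall r, normd d (xs 0%nat) (xs N) (b r) <= M)
  (Halpha : forall i r, (1 <= i <= N)%nat -> in_Lipd d (xs 0%nat) (xs N) (alpha i r))
  (Hsmall : forall r i, (1 <= i <= N)%nat ->
     normd d (xs 0%nat) (xs N) (alpha i r) / Rpower (a_coef xs N i) d < 1 / 2) :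
  let T := fun r => T_op xs N f (fun i => alpha i r) (b r) in
  (forall r,
     (forall g, in_Lipdf d (xs 0%nat) (xs N) f g ->
        (forall i x, (1 <= i <= N)%nat -> inI (xs (i - 1)%nat) (xs i) x ->
           T r g x = T_branch xs N f (fun i => alpha i r) (b r) g i x) /\
        in_Lipdf d (xs 0%nat) (xs N) f (T r g)) /\
     (exists c, 0 <= c < 1 /\
        forall g h, in_Lipdf d (xs 0%nat) (xs N) f g -> in_Lipdf d (xs 0%nat) (xs N) f h ->
          normd d (xs 0%nat) (xs N) (fun x => T r g x - T r h x)
            <= c * normd d (xs 0%nat) (xs N) (fun x => g x - h x))) /\
  (exists fa, in_Lipdf d (xs 0%nat) (xs N) f fa /\
     (forall g, in_Lipdf d (xs 0%nat) (xs N) f g ->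
        is_lim_seq (fun r => normd d (xs 0%nat) (xs N) (fun x => Tcomp T r g x - fa x)) 0) /\
     (forall fb, in_Lipdf d (xs 0%nat) (xs N) f fb ->
        (forall g, in_Lipdf d (xs 0%nat) (xs N) f g ->
           is_lim_seq (fun r => normd d (xs 0%nat) (xs N) (fun x => Tcomp T r g x - fb x)) 0) ->
        forall x, inI (xs 0%nat) (xs N) x -> fb x = fa x)).
Proof.
  intros T.
  set (x0 := xs 0%nat) in *. set (xN := xs N) in *.
  assert (Hlt : x0 < xN) by (apply (xs_smono N xs Hxs); lia).
  assert (Hle : x0 <= xN) by lra.
  assert (Hd0 : 0 < d) by lra.
  set (rho := (1 + Rpower (/2) d) / 2).
  assert (Hh0 : 0 < Rpower (/2) d) by apply Rpower_pos'.
  assert (Hh1 : Rpower (/2) d < 1) by (apply Rpower_half_lt1; lra).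
  assert (Hrho : 1/2 < rho < 1) by (unfold rho; lra).
  set (th := Rmax (3/4) rho).
  assert (Hth : 3/4 <= th /\ rho <= th /\ th < 1).
  { unfold th. split; [apply Rmax_l|]. split; [apply Rmax_r|]. apply Rmax_lub_lt; lra. }
  assert (LS : forall h, in_Lipd d x0 xN h -> SB x0 xN (normd d x0 xN h) h)
    by (intros; apply Lip_SB; auto).
  assert (LH : forall h, in_Lipd d x0 xN h -> HB d x0 xN (normd d x0 xN h) h)
    by (intros; apply Lip_HB; auto).
  assert (LN : forall h, in_Lipd d x0 xN h -> 0 <= normd d x0 xN h)
    by (intros; apply normd_nonneg; auto).
  assert (Lminus : forall g h, in_Lipd d x0 xN g -> in_Lipd d x0 xN h ->
             in_Lipd d x0 xN (fun x => g x - h x)).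
  { intros g h Hg Hh. eapply HB_in_Lipd. apply HB_minus; [apply LH|apply LH]; eauto. }
  assert (Halc : forall r c, (forall i, (1 <= i <= N)%nat ->
               normd d x0 xN (alpha i r) <= c * Rpower (a_coef xs N i) d / 2) ->
             forall i, (1 <= i <= N)%nat ->
             SB x0 xN (c * Rpower (a_coef xs N i) d / 2) (alpha i r) /\
             HB d x0 xN (c * Rpower (a_coef xs N i) d / 2) (alpha i r)).
  { intros r c Hc i Hi. split.
    - eapply SB_mono. apply LS, Halpha; auto. apply Hc; auto.
    - eapply HB_mono. apply LH, Halpha; auto. apply Hc; auto. }
  assert (Hal1 : forall r i, (1 <= i <= N)%nat ->
             normd d x0 xN (alpha i r) <= 1 * Rpower (a_coef xs N i) d / 2).
  { intros r i Hi. specialize (Hsmall r i Hi).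
    assert (0 < Rpower (a_coef xs N i) d) by apply Rpower_pos'.
    apply Rmult_lt_compat_r with (r := Rpower (a_coef xs N i) d) in Hsmall; auto.
    unfold Rdiv in Hsmall. rewrite Rmult_assoc, Rinv_l in Hsmall by lra. lra. }
  destruct Hbnd as [Mb HMb].
  assert (HMb0 : 0 <= Mb).
  { apply Rle_trans with (normd d x0 xN (b 0%nat)); auto. apply LN, Hb. }
  assert (HbS : forall r, SB x0 xN Mb (b r)).
  { intros r. eapply SB_mono. apply LS, Hb. auto. }
  assert (HbH : forall r, HB d x0 xN Mb (b r)).
  { intros r. eapply HB_mono. apply LH, Hb. auto. }
  assert (Hfdf : in_Lipdf d x0 xN f f) by (split; auto).
  assert (Hw1 : forall r g, in_Lipdf d x0 xN f g ->
     SB x0 xN (1 * (normd d x0 xN g + Mb) / 2) (fun x => T r g x - f x) /\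
     HB d x0 xN (1 * Rmax ((normd d x0 xN g + Mb + (normd d x0 xN g + Mb)) / 2)
                          ((1 + Rpower (/2) d) / 2 * (normd d x0 xN g + Mb))) (fun x => T r g x - f x)).
  { intros r g [Hg [Hg0 HgN]]. destruct (Hb r) as [Hbr [Hb0 HbN]].
    assert (0 <= normd d x0 xN g) by auto.
    apply (core N xs d 1 _ _ (fun i => alpha i r) (fun x => g x - b r x)); auto; try lra.
    - intros i Hi. apply (Halc r 1); auto.
    - intros i Hi. apply (Halc r 1); auto.
    - unfold x0 in *; rewrite Hg0, Hb0; ring.
    - unfold xN in *; rewrite HgN, HbN; ring.
    - apply SB_minus; auto.
    - apply HB_minus; auto.
    - intros i x Hi Hx. unfold T. simpl. apply (T_minus_f N xs f (fun i => alpha i r) (b r) g); auto; unfold x0, xN in *; congruence. }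
  assert (PT1 : forall r g, in_Lipdf d x0 xN f g -> in_Lipdf d x0 xN f (T r g)).
  { intros r g Hg. destruct (Hw1 r g Hg) as [_ HH].
    destruct Hg as [Hg [Hg0 HgN]]. destruct (Hb r) as [Hbr [Hb0 HbN]].
    assert (G0 : g (xs 0%nat) = b r (xs 0%nat)) by (unfold x0 in *; congruence).
    assert (GN : g (xs N) = b r (xs N)) by (unfold xN in *; congruence).
    destruct (T_ends N xs f (fun i => alpha i r) (b r) g HN Hxs G0 GN) as [E0 EN].
    split; [|split; auto].
    eapply HB_in_Lipd. eapply HB_ext. apply (HB_plus _ _ _ _ _ _ _ (LH f Hf) HH).
    intros x _. simpl. ring. }
  assert (PT3 : forall r g h K, in_Lipdf d x0 xN f g -> in_Lipdf d x0 xN f h ->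
         Bnd d x0 xN K (fun x => g x - h x) -> Bnd d x0 xN (th * K) (fun x => T r g x - T r h x)).
  { intros r g h K [Hg [Hg0 HgN]] [Hh [Hh0' HhN]] [M [L [HM [HL [HK [HS HH]]]]]].
    destruct (Hb r) as [Hbr [Hb0 HbN]].
    destruct (core N xs d 1 M L (fun i => alpha i r) (fun x => g x - h x) (fun x => T r g x - T r h x))
      as [C1 C2]; auto; try lra.
    - intros i Hi. apply (Halc r 1); auto.
    - intros i Hi. apply (Halc r 1); auto.
    - unfold x0 in *; rewrite Hg0, Hh0'; ring.
    - unfold xN in *; rewrite HgN, HhN; ring.
    - intros i x Hi Hx. unfold T. simpl. apply (T_diff N xs f (fun i => alpha i r) (b r) g h); auto; unfold x0, xN in *; congruence.
    - eapply Bnd_mono. apply Bnd_of; [| |exact C1|exact C2].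
      + lra.
      + apply Rle_trans with ((M + L) / 2); [lra| rewrite Rmult_1_l; apply Rmax_l].
      + fold rho. rewrite !Rmult_1_l. assert (0 <= th * (2 * M + L)) by nra.
        apply Rle_trans with (th * (2 * M + L)); [|nra].
        unfold Rmax. destruct (Rle_dec ((M + L) / 2) (rho * L)); nra. }
  set (nf := normd d x0 xN f).
  assert (Hnf : 0 <= nf) by (apply LN; auto).
  set (K0 := 2 * (nf + Mb)).
  assert (PT4 : forall r, Bnd d x0 xN K0 (fun x => T r f x - f x)).
  { intros r. destruct (Hw1 r f Hfdf) as [S1 H1]. fold nf in S1, H1.
    eapply Bnd_mono. apply Bnd_of; [| | exact S1 | exact H1].
    - lra.
    - apply Rle_trans with ((nf + Mb + (nf + Mb))/2); [lra| rewrite Rmult_1_l; apply Rmax_l].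
    - rewrite !Rmult_1_l. unfold K0.
      assert (Rmax ((nf + Mb + (nf + Mb)) / 2) ((1 + Rpower (/ 2) d) / 2 * (nf + Mb)) <= nf + Mb).
      { apply Rmax_lub; [lra|]. fold rho. nra. }
      lra. }
  assert (Hth01 : 0 <= th < 1) by lra.
  assert (HK0 : 0 <= K0) by (unfold K0; lra).
  set (C := K0 / (1 - th)).
  assert (HC : 0 <= C) by (unfold C; apply Rdiv_le_0_compat; lra).
  assert (Htel : forall n k, Bnd d x0 xN (C * th ^ n) (fun x => Tcomp T (n + k) f x - Tcomp T n f x)).
  { intros n k. eapply Bnd_mono. apply (telescope d x0 xN f th K0 f T); auto.
    unfold C. assert (0 <= th ^ (n + k)) by (apply pow_le; lra).
    replace (K0 / (1 - th) * th ^ n) with (K0 * th ^ n / (1 - th)) by (field; lra).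
    unfold Rdiv. apply Rmult_le_compat_r. left; apply Rinv_0_lt_compat; lra. nra. }
  destruct (limit_exists d x0 xN (fun m => Tcomp T m f) C th Hth01 HC Htel) as [Hlim Hfa].
  cbv beta in Hlim, Hfa.
  set (fa := fun x => real (Lim_seq (fun m => Tcomp T m f x))) in *.
  assert (Fl := iter_Lip d x0 xN f T PT1).
  split.
  - intros r. split.
    + intros g Hg. split; [|apply PT1; auto].
      intros i x Hi Hx. destruct Hg as [Hg [Hg0 HgN]]; destruct (Hb r) as [Hbr [Hb0 HbN]].
      unfold T. apply (T_branch_ok N xs f (fun i => alpha i r) (b r) g); auto; unfold x0, xN in *; congruence.
    + set (cr := 2 * mx (fun i => normd d x0 xN (alpha i r) / Rpower (a_coef xs N i) d) N).
      assert (Hcr : 0 <= cr < 1).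
      { unfold cr. split.
        - assert (H := mx_nonneg (fun i => normd d x0 xN (alpha i r) / Rpower (a_coef xs N i) d) N). lra.
        - assert (mx (fun i => normd d x0 xN (alpha i r) / Rpower (a_coef xs N i) d) N < 1/2)
            by (apply mx_lt; [lra| intros; apply Hsmall; auto]). lra. }
      assert (Hcb : forall i, (1 <= i <= N)%nat -> normd d x0 xN (alpha i r) <= cr * Rpower (a_coef xs N i) d / 2).
      { intros i Hi. assert (H := mx_ge (fun i => normd d x0 xN (alpha i r) / Rpower (a_coef xs N i) d) N i Hi).
        cbv beta in H.
        assert (0 < Rpower (a_coef xs N i) d) by apply Rpower_pos'.
        unfold cr. apply Rmult_le_compat_r with (r := Rpower (a_coef xs N i) d) in H; [|lra].
        unfold Rdiv in H. rewrite Rmult_assoc, Rinv_l in H; lra. }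
      exists cr. split; auto. intros g h [Hg [Hg0 HgN]] [Hh [Hh0' HhN]].
      set (M := normd d x0 xN (fun x => g x - h x)).
      assert (HLm := Lminus g h Hg Hh). assert (HM : 0 <= M) by (apply LN; auto).
      destruct (Hb r) as [Hbr [Hb0 HbN]].
      destruct (core N xs d cr M M (fun i => alpha i r) (fun x => g x - h x) (fun x => T r g x - T r h x))
        as [C1 C2]; auto; try lra.
      * intros i Hi. apply (Halc r cr); auto.
      * intros i Hi. apply (Halc r cr); auto.
      * unfold x0 in *; rewrite Hg0, Hh0'; ring.
      * unfold xN in *; rewrite HgN, HhN; ring.
      * apply LS; auto.
      * apply LH; auto.
      * intros i x Hi Hx. unfold T. simpl.
        apply (T_diff N xs f (fun i => alpha i r) (b r) g h); auto; unfold x0, xN in *; congruence.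
      * apply normd_le.
        -- nra.
        -- eapply SB_mono; [exact C1| nra].
        -- eapply HB_mono; [exact C2|]. apply Rmult_le_compat_l; [lra|].
           apply Rmax_lub; [lra|]. fold rho. nra.
  - assert (Hfa_lip : in_Lipdf d x0 xN f fa).
    { split; [|split].
      - destruct (Hfa 0%nat) as [_ H0]. eapply HB_in_Lipd. eapply HB_ext.
        apply (HB_plus _ _ _ _ _ _ _ (LH f Hf) H0). intros x _. cbv beta. change (Tcomp T 0 f x) with (f x). unfold fa. ring.
      - unfold fa. rewrite (Lim_seq_ext _ (fun _ => f x0)). rewrite Lim_seq_const. reflexivity.
        intros m. destruct (Fl m f Hfdf) as [_ [E _]]. exact E.
      - unfold fa. rewrite (Lim_seq_ext _ (fun _ => f xN)). rewrite Lim_seq_const. reflexivity.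
        intros m. destruct (Fl m f Hfdf) as [_ [_ E]]. exact E. }
    assert (Hconv : forall g, in_Lipdf d x0 xN f g ->
        is_lim_seq (fun r => normd d x0 xN (fun x => Tcomp T r g x - fa x)) 0).
    { intros g Hg.
      set (Kg := 3 * (normd d x0 xN g + nf)).
      assert (Bg : Bnd d x0 xN Kg (fun x => g x - f x)).
      { eapply Bnd_mono. apply Bnd_of; [| | apply SB_minus; apply LS | apply HB_minus; apply LH];
        try apply Hg; try apply Hf; try apply LN; try apply Hg; try apply Hf.
        - assert (0 <= normd d x0 xN g) by (apply LN; apply Hg). fold nf. lra.
        - assert (0 <= normd d x0 xN g) by (apply LN; apply Hg). fold nf. lra.
        - unfold Kg. fold nf. lra. }
      assert (It := fun n => iter_bnd d x0 xN f th T PT1 PT3 n g f Kg Hg Hfdf Bg).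
      assert (HKg : 0 <= Kg) by (apply (Bnd_nonneg _ _ _ _ _ Bg)).
      assert (Hbd : forall n, SB x0 xN ((Kg + C) * th ^ n) (fun x => Tcomp T n g x - fa x) /\ HB d x0 xN ((Kg + C) * th ^ n) (fun x => Tcomp T n g x - fa x)).
      { intros n. destruct (Hfa n) as [S2 H2].
        assert (S1 := Bnd_SB _ _ _ _ _ (It n)). assert (H1 := Bnd_HB _ _ _ _ _ (It n)).
        split.
        - eapply SB_mono. eapply SB_ext. apply (SB_minus _ _ _ _ _ _ S1 S2).
          intros x _. cbv beta. unfold fa. ring. right; ring.
        - eapply HB_mono. eapply HB_ext. apply (HB_minus _ _ _ _ _ _ _ H1 H2).
          intros x _. cbv beta. unfold fa. ring. right; ring. }
      apply is_lim_seq_le_le with (u := fun _ => 0) (w := fun n => (Kg + C) * th ^ n).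
      - intros n. destruct (Hbd n) as [S H]. split.
        + apply LN. eapply HB_in_Lipd; exact H.
        + apply normd_le; auto. apply Rmult_le_pos; [lra| apply pow_le; lra].
      - apply is_lim_seq_const.
      - replace (Finite 0) with (Rbar_mult (Kg + C) 0) by (simpl; f_equal; ring).
        apply is_lim_seq_scal_l. apply is_lim_seq_geom. rewrite Rabs_right; lra. }
    exists fa. split; [exact Hfa_lip|]. split; [exact Hconv|].
    intros fb [Hfb [Hfb0 HfbN]] Hlimb x Hx.
    assert (L1 := Hlimb f Hfdf). assert (L2 := Hconv f Hfdf).
    assert (Hineq : forall n, Rabs (fb x - fa x) <=
        normd d x0 xN (fun x => Tcomp T n f x - fb x) + normd d x0 xN (fun x => Tcomp T n f x - fa x)).
    { intros n. destruct (Fl n f Hfdf) as [HFn _].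
      assert (A1 := LS _ (Lminus _ _ HFn Hfb) x Hx).
      assert (A2 := LS _ (Lminus _ _ HFn (proj1 Hfa_lip)) x Hx). cbv beta in A1, A2.
      replace (fb x - fa x) with ((Tcomp T n f x - fa x) - (Tcomp T n f x - fb x)) by ring.
      unfold Rminus at 1. apply Rle_trans with (1 := Rabs_triang _ _). rewrite Rabs_Ropp. lra. }
    assert (Hle0 := is_lim_seq_le (fun _ => Rabs (fb x - fa x)) _ _ _ Hineq (is_lim_seq_const _)
                      (is_lim_seq_plus' _ _ _ _ L1 L2)).
    simpl in Hle0. rewrite Rplus_0_r in Hle0.
    destruct (Req_dec (fb x) (fa x)) as [|Hne]; auto. exfalso.
    assert (0 < Rabs (fb x - fa x)) by (apply Rabs_pos_lt; lra). lra.
Qed.
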